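(* Let $f:\mathbb{R}^n\to(-\infty,\infty]$ and $g:\mathbb{R}^p\to(-\infty,\infty]$ be proper closed convex functions, $A\in\mathbb{R}^{m\times n}$, $B\in\mathbb{R}^{m\times p}$, $b\in\mathbb{R}^m$, $\beta>0$, $\tilde\sigma\in[0,1)$, $G\in\mathbb{S}^n_{++}$, $H\in\mathbb{S}^p_+$, and $(\tau,\theta)\in\mathcal R_{\tilde\sigma}$. Define the set-valued operator $T$ on $\mathbb{R}^n\times\mathbb{R}^p\times\mathbb{R}^m$ and the matrix $M$ by $$T(x,y,\gamma)=\begin{bmatrix}\partial f(x)-A^*\gamma\\ \partial g(y)-B^*\gamma\\ Ax+By-b\end{bmatrix},\qquad M=\begin{bmatrix}G&0&0\\0&H+\frac{(\tau-\tau\theta+\theta)\beta}{\tau+\theta}B^*B&-\frac{\tau}{\tau+\theta}B^*\\0&-\frac{\tau}{\tau+\theta}B&\frac{1}{(\tau+\theta)\beta}I\end{bmatrix}.$$ Then $T$ is maximal monotone and $M$ is symmetric positive semidefinite.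
   Context: $\partial$ denotes the subdifferential of a convex function, $A^*$ the transpose, $\mathbb{S}^n_{++}$ ($\mathbb{S}^p_+$) the symmetric positive definite (semidefinite) $n\times n$ ($p\times p$) matrices. $\mathcal R_{\tilde\sigma}:=\{(\tau,\theta):\tau\in(-1,1-\tilde\sigma),\ \tau+\theta>0,\ (1-\tau^2)(2-\tau-\theta-\tilde\sigma)-(1-\theta)^2(1-\tau-\tilde\sigma)>0\}$. *)

(* Defs.v *)
From HB Require Import structures.
From mathcomp Require Import all_boot all_order all_algebra.
From mathcomp Require Import all_classical all_reals all_analysis.
Set Implicit Arguments. Unset Strict Implicit. Unset Printing Implicit Defensive.
Import Order.TTheory GRing.Theory Num.Theory.
Local Open Scope classical_set_scope.
Local Open Scope ring_scope.

Import numFieldNormedType.Exports.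

Section Defs.
Variable R : realType.

Definition dotv (n : nat) (u v : 'cV[R]_n) : R := (u^T *m v) ord0 ord0.

Definition proper_fun (n : nat) (f : 'cV[R]_n -> \bar R) : Prop :=
  (forall x, f x != -oo%E) /\ (exists x, f x \is a fin_num).

Definition closed_fun (n : nat) (f : 'cV[R]_n -> \bar R) : Prop :=
  closed [set q : 'cV[R]_n * R | (f q.1 <= q.2%:E)%E].

Definition convex_fun (n : nat) (f : 'cV[R]_n -> \bar R) : Prop :=
  forall (x y : 'cV[R]_n) (t : R), 0 < t < 1 ->
    (f (t *: x + (1 - t) *: y)%R <= t%:E * f x + (1 - t)%:E * f y)%E.

Definition proper_closed_convex (n : nat) (f : 'cV[R]_n -> \bar R) : Prop :=
  [/\ proper_fun f, closed_fun f & convex_fun f].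

Definition subdiff (n : nat) (f : 'cV[R]_n -> \bar R) (x : 'cV[R]_n) : set 'cV[R]_n :=
  [set v | f x \is a fin_num /\
           forall z, (f x + (dotv v (z - x)%R)%:E <= f z)%E].

Definition prod3 (n p m : nat) := ('cV[R]_n * 'cV[R]_p * 'cV[R]_m)%type.

Definition dot3 (n p m : nat) (u v : prod3 n p m) : R :=
  dotv u.1.1 v.1.1 + dotv u.1.2 v.1.2 + dotv u.2 v.2.

Definition sub3 (n p m : nat) (u v : prod3 n p m) : prod3 n p m :=
  (u.1.1 - v.1.1, u.1.2 - v.1.2, u.2 - v.2).

Definition monotone_op (n p m : nat) (T : prod3 n p m -> set (prod3 n p m)) : Prop :=
  forall z z' w w', T z w -> T z' w' -> 0 <= dot3 (sub3 z z') (sub3 w w').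

Definition maximal_monotone_op (n p m : nat) (T : prod3 n p m -> set (prod3 n p m)) : Prop :=
  monotone_op T /\
  forall S : prod3 n p m -> set (prod3 n p m), monotone_op S ->
    (forall z w, T z w -> S z w) -> forall z w, S z w -> T z w.

Definition symmetric_mx (k : nat) (X : 'M[R]_k) : Prop := X^T = X.

Definition spd (k : nat) (X : 'M[R]_k) : Prop :=
  symmetric_mx X /\ forall v : 'cV[R]_k, v != 0 -> 0 < dotv v (X *m v).
Definition spsd (k : nat) (X : 'M[R]_k) : Prop :=
  symmetric_mx X /\ forall v : 'cV[R]_k, 0 <= dotv v (X *m v).

Definition region_R (s tau theta : R) : Prop :=
  [/\ -1 < tau < 1 - s, 0 < tau + theta &
      0 < (1 - tau ^+ 2) * (2 - tau - theta - s) - (1 - theta) ^+ 2 * (1 - tau - s)].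

Definition opT (n p m : nat) (f : 'cV[R]_n -> \bar R) (g : 'cV[R]_p -> \bar R)
  (A : 'M[R]_(m, n)) (B : 'M[R]_(m, p)) (b : 'cV[R]_m)
  (z : prod3 n p m) : set (prod3 n p m) :=
  [set w | exists u v, [/\ subdiff f z.1.1 u, subdiff g z.1.2 v &
      w = (u - A^T *m z.2, v - B^T *m z.2, A *m z.1.1 + B *m z.1.2 - b)]].

Definition matM (n p m : nat) (A : 'M[R]_(m, n)) (B : 'M[R]_(m, p))
  (beta tau theta : R) (G : 'M[R]_n) (H : 'M[R]_p) : 'M[R]_(n + (p + m)) :=
  block_mx G 0 0
    (block_mx (H + ((tau - tau * theta + theta) * beta / (tau + theta)) *: (B^T *m B))
              (- (tau / (tau + theta)) *: B^T)
              (- (tau / (tau + theta)) *: B)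
              ((1 / ((tau + theta) * beta)) *: 1%:M)).

End Defs.

(* Main.v *)
Require Import Defs.
From HB Require Import structures.
From mathcomp Require Import all_boot all_order all_algebra.
From mathcomp Require Import all_classical all_reals all_analysis.
From mathcomp Require Import ring lra.
Import Order.TTheory GRing.Theory Num.Theory.
Import numFieldNormedType.Exports.
Local Open Scope ring_scope.

Set Implicit Arguments. Unset Strict Implicit.

Section Dot.
Variable R : realType.
Implicit Types (k : nat).

Lemma dotvE k (u v : 'cV[R]_k) : dotv u v = \sum_i u i ord0 * v i ord0.
Proof. by rewrite /dotv mxE; apply: eq_bigr => i _; rewrite mxE. Qed.

Lemma dotvC k (u v : 'cV[R]_k) : dotv u v = dotv v u.
Proof. rewrite !dotvE; apply: eq_bigr => i _; by rewrite mulrC. Qed.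

Lemma dotvDl k (u v w : 'cV[R]_k) : dotv (u + v) w = dotv u w + dotv v w.
Proof. rewrite !dotvE -big_split; apply: eq_bigr => i _; by rewrite mxE mulrDl. Qed.
Lemma dotvDr k (u v w : 'cV[R]_k) : dotv w (u + v) = dotv w u + dotv w v.
Proof. by rewrite dotvC dotvDl !(dotvC w). Qed.
Lemma dotvZl k a (u w : 'cV[R]_k) : dotv (a *: u) w = a * dotv u w.
Proof. rewrite !dotvE mulr_sumr; apply: eq_bigr => i _; by rewrite mxE mulrA. Qed.
Lemma dotvZr k a (u w : 'cV[R]_k) : dotv w (a *: u) = a * dotv w u.
Proof. by rewrite dotvC dotvZl dotvC. Qed.
Lemma dotvNl k (u w : 'cV[R]_k) : dotv (- u) w = - dotv u w.
Proof. by rewrite -scaleN1r dotvZl mulN1r. Qed.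
Lemma dotvNr k (u w : 'cV[R]_k) : dotv w (- u) = - dotv w u.
Proof. by rewrite dotvC dotvNl dotvC. Qed.
Lemma dotvBl k (u v w : 'cV[R]_k) : dotv (u - v) w = dotv u w - dotv v w.
Proof. by rewrite dotvDl dotvNl. Qed.
Lemma dotvBr k (u v w : 'cV[R]_k) : dotv w (u - v) = dotv w u - dotv w v.
Proof. by rewrite dotvDr dotvNr. Qed.
Lemma dotv0l k (w : 'cV[R]_k) : dotv 0 w = 0.
Proof. by rewrite dotvE big1 // => i _; rewrite mxE mul0r. Qed.
Lemma dotv0r k (w : 'cV[R]_k) : dotv w 0 = 0.
Proof. by rewrite dotvC dotv0l. Qed.
Lemma dotv_tr k l (M : 'M[R]_(k,l)) u v : dotv u (M^T *m v) = dotv (M *m u) v.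
Proof. by rewrite /dotv trmx_mul mulmxA. Qed.
Lemma dotv_ge0 k (u : 'cV[R]_k) : 0 <= dotv u u.
Proof. rewrite dotvE; apply: sumr_ge0 => i _; by rewrite -expr2 sqr_ge0. Qed.
Lemma dotv_eq0 k (u : 'cV[R]_k) : dotv u u = 0 -> u = 0.
Proof.
rewrite dotvE => /eqP; rewrite psumr_eq0 => [/allP H|i _]; last by rewrite -expr2 sqr_ge0.
apply/matrixP => i j; rewrite (ord1 j) mxE.
by have /(_ (mem_index_enum i)) := H i; rewrite implyTb mulf_eq0 orbb => /eqP.
Qed.
Lemma entry_le k (u : 'cV[R]_k) i : u i ord0 ^+ 2 <= dotv u u.
Proof.
rewrite dotvE (bigD1 i) //= -expr2 lerDl; apply: sumr_ge0 => j _; by rewrite -expr2 sqr_ge0.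
Qed.
End Dot.


Section PSD.
Variable R : realType.
Lemma dotv_col k l (a c : 'cV[R]_k) (b d : 'cV[R]_l) :
  dotv (col_mx a b) (col_mx c d) = dotv a c + dotv b d.
Proof. by rewrite /dotv tr_col_mx mul_row_col mxE. Qed.

Lemma matM_spsd (n p m : nat) (A : 'M[R]_(m, n)) (B : 'M[R]_(m, p))
  (beta s tau theta : R) (G : 'M[R]_n) (H : 'M[R]_p) :
  0 < beta -> 0 <= s < 1 -> spd G -> spsd H -> region_R s tau theta ->
  spsd (matM A B beta tau theta G H).
Proof.
move=> b0 /andP[s0 s1] [GS Gp] [HS Hp] [/andP[t1 t2] S0 _].
split.
  rewrite /symmetric_mx /matM tr_block_mx tr_block_mx !trmx0 GS.
  rewrite !linearD !linearZ /= trmx_mul trmxK HS trmx1 /=.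
  done.
move=> v; rewrite -(vsubmxK v) -(vsubmxK (dsubmx v)) /matM.
set v1 := usubmx v; set v2 := usubmx (dsubmx v); set v3 := dsubmx (dsubmx v).
rewrite !mul_block_col !dotv_col !mul0mx !addr0 add0r dotv_col.
have G0 : 0 <= dotv v1 (G *m v1).
  have [->|/Gp/ltW//] := eqVneq v1 0; by rewrite mulmx0 dotv0r.
have H0 := Hp v2.
rewrite !mulmxDl !dotvDr -!scalemxAl !dotvZr -mulmxA dotv_tr mul1mx dotv_tr.
set X := dotv (B *m v2) (B *m v2).
set Y := dotv (B *m v2) v3.
set Z := dotv v3 v3.
have -> : dotv v3 (B *m v2) = Y by rewrite /Y dotvC.
have W0 := dotv_ge0 (v3 - (tau * beta) *: (B *m v2)).
rewrite dotvBl !dotvBr !dotvZl !dotvZr -/X -/Y -/Z in W0.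
rewrite (dotvC v3 (B *m v2)) -/Y in W0.
have X0 : 0 <= X by exact: dotv_ge0.
set S := tau + theta.
have e : (tau - tau * theta + theta) * beta / S * X + - (tau / S) * Y + (- (tau / S) * Y + 1 / (S * beta) * Z)
   = 1 / (S * beta) * (Z - tau * beta * Y - (tau * beta * Y - tau * beta * (tau * beta * X))) + beta * (1 - tau) * X.
  rewrite /S; field; apply/andP; split; apply/lt0r_neq0 => //.
have : 0 <= (tau - tau * theta + theta) * beta / S * X + - (tau / S) * Y + (- (tau / S) * Y + 1 / (S * beta) * Z).
  rewrite e; apply: addr_ge0.
    apply: mulr_ge0 => //; rewrite divr_ge0 // ltW // mulr_gt0 //.
  apply: mulr_ge0 => //; apply: mulr_ge0; lra.
lra.
Qed.
End PSD.

Section Mono.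
Variable R : realType.

Lemma subBB (V : zmodType) (a b c d : V) : (a - b) - (c - d) = (a - c) - (b - d).
Proof. by rewrite !opprB [LHS]addrACA [RHS]addrACA [- c + _]addrC. Qed.

Lemma subdiff_mono k (f : 'cV[R]_k -> \bar R) x x' u u' :
  subdiff f x u -> subdiff f x' u' -> 0 <= dotv (x - x') (u - u').
Proof.
move=> [fx Hx] [fx' Hx'].
have := Hx x'; have := Hx' x.
rewrite -(fineK fx) -(fineK fx') -!EFinD !lee_fin.
rewrite (dotvC (x - x')) dotvBl -(opprB x x') dotvNr => h1 h2.
set a1 := dotv u _ in h2 *; set a2 := dotv u' _ in h1 *; set r1 := fine _ in h1 h2; set r2 := fine (f x') in h1 h2. lra.
Qed.

Lemma skew3 n p m (A : 'M[R]_(m, n)) (B : 'M[R]_(m, p)) X U Y V D :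
  dotv X (U - A^T *m D) + dotv Y (V - B^T *m D) + dotv D (A *m X + B *m Y)
  = dotv X U + dotv Y V.
Proof.
rewrite !dotvBr !dotvDr !dotv_tr (dotvC D) (dotvC D).
set a1 := dotv X U; set a2 := dotv Y V; set a3 := dotv (A *m X) D; set a4 := dotv (B *m Y) D.
lra.
Qed.

Lemma opT_mono n p m (f : 'cV[R]_n -> \bar R) (g : 'cV[R]_p -> \bar R)
  (A : 'M[R]_(m, n)) (B : 'M[R]_(m, p)) (b : 'cV[R]_m) :
  monotone_op (opT f g A B b).
Proof.
move=> [[x y] c] [[x' y'] c'] w w' [u [v [/= Hu Hv ->]]] [u' [v' [/= Hu' Hv' ->]]].
rewrite /dot3 /sub3 /=.
rewrite (subBB u) (subBB v) -!mulmxBr.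
have -> : A *m x + B *m y - b - (A *m x' + B *m y' - b) = A *m (x - x') + B *m (y - y').
  rewrite !mulmxBr; move: (A *m x) (A *m x') (B *m y) (B *m y') => P Q P' Q'.
  by apply/matrixP => i j; rewrite !mxE; ring.
rewrite skew3; apply: addr_ge0; [exact: (subdiff_mono Hu Hu') | exact: (subdiff_mono Hv Hv')].
Qed.
End Mono.

Section Prox.
Variable R : realType.
Local Open Scope classical_set_scope.

Lemma lsc_pt k (f : 'cV[R]_k -> \bar R) x0 r : closed_fun f -> (r%:E < f x0)%E ->
  exists2 d, 0 < d & forall x, `|x0 - x| < d -> (r%:E < f x)%E.
Proof.
move=> cl fx0.
have /closed_openC := cl; rewrite openE => /(_ (x0, r)).
have H : (~` [set q : 'cV[R]_k * R | (f q.1 <= q.2%:E)%E]) (x0, r).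
  by rewrite /= => /(lt_le_trans fx0); rewrite ltxx.
move=> /(_ H) /nbhs_ballP [e e0 He].
exists e => // x hx.
have /He : ball (x0, r) e (x, r).
  split => /=; first by rewrite -ball_normE.
  exact: ballxx.
rewrite /= => /negP; rewrite -ltNge //.
Qed.

Lemma norm_le k (v : 'cV[R]_k) : `|v| ^+ 2 <= dotv v v.
Proof.
have -> : `|v| = mx_norm v by [].
have [->|/mx_norm_neq0 [i ->]] := eqVneq (mx_norm v) 0.
  rewrite expr0n /=; exact: dotv_ge0.
by rewrite real_normK ?num_real // (ord1 i.2); exact: entry_le.
Qed.

Lemma lower_bound k (f : 'cV[R]_k -> \bar R) : proper_closed_convex f ->
  exists x0 C, forall y, ((C - dotv (y - x0) (y - x0) / 4)%:E <= f y)%E.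
Proof.
move=> [[fnm [x0 fx0]] cl cv].
set r0 := fine (f x0); have fx0E : f x0 = r0%:E by rewrite /r0 fineK.
have [d d0 Hd] : exists2 d, 0 < d & forall x, `|x0 - x| < d -> ((r0 - 1)%:E < f x)%E.
  by apply: lsc_pt => //; rewrite fx0E lte_fin; lra.
set d' := Num.min d (1/2).
have d'0 : 0 < d' by rewrite lt_min d0 /=; lra.
have d'd : d' <= d by rewrite ge_min lexx.
have d'1 : d' < 1 by rewrite gt_min; apply/orP; right; lra.
exists x0, (r0 - 1/d' - 4/d'^+2) => y.
case Ey: (f y) => [ry| |]; last 2 first.
- exact: leey.
- by have := fnm y; rewrite Ey.
set Nn := dotv (y - x0) (y - x0); set M := `|x0 - y|.
have MN : M ^+ 2 <= Nn by rewrite /M distrC; exact: norm_le.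
have M0 : 0 <= M by exact: normr_ge0.
have N0 : 0 <= Nn by exact: dotv_ge0.
set e := 4 / d'.
have e0 : 0 < e by rewrite divr_gt0.
set K := 1 + Nn / e + e.
have K1 : 1 < K.
  have : 0 <= Nn / e by rewrite divr_ge0 // ltW.
  rewrite /K; lra.
have MK : M < K.
  have h1 : 0 <= (M - e) ^+ 2 / e by rewrite divr_ge0 ?sqr_ge0 // ltW.
  have h2 : M ^+ 2 / e <= Nn / e by rewrite ler_pM2r // invr_gt0.
  have h3 : (M - e) ^+ 2 / e = M ^+ 2 / e - 2 * M + e.
    by field; rewrite gt_eqF.
  rewrite /K; lra.
set t := d' / K.
have K0 : 0 < K by lra.
have t0 : 0 < t by rewrite divr_gt0.
have t1 : t < 1 by rewrite ltr_pdivrMr // mul1r; lra.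
set w := t *: y + (1 - t) *: x0.
have hw : `|x0 - w| < d.
  have -> : x0 - w = t *: (x0 - y).
    by apply/matrixP => i j; rewrite !mxE; ring.
  rewrite normrZ gtr0_norm // -/M.
  apply: (lt_le_trans _ d'd); rewrite /t mulrAC ltr_pdivrMr // ltr_pM2l //.
have := Hd _ hw.
have := cv y x0 t; rewrite t0 t1 => /(_ isT).
rewrite Ey fx0E -!EFinM -EFinD => h1 h2.
have := lt_le_trans h2 h1; rewrite lte_fin => h3.
have h4 : (r0 - ry) * d' < K.
  have : t * (r0 - ry) < 1 by lra.
  by rewrite /t mulrAC ltr_pdivrMr // mul1r mulrC.
have h5 : (r0 - 1 / d' - 4 / d' ^+ 2 - Nn / 4) * d' = r0 * d' - K.
  by rewrite /K /e; field; rewrite gt_eqF.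
rewrite lee_fin -(ler_pM2r d'0) h5; lra.
Qed.
End Prox.

Section Prox2.
Variable R : realType.
Local Open Scope classical_set_scope.

Lemma par k (u v : 'cV[R]_k) : dotv (u + v) (u + v) <= 2 * dotv u u + 2 * dotv v v.
Proof.
have h := dotv_ge0 (u - v).
rewrite dotvBl !dotvBr (dotvC v u) in h.
rewrite dotvDl !dotvDr (dotvC v u); move: h.
set a := dotv u u; set b := dotv v v; set c := dotv u v => h. lra.
Qed.

Lemma mid_id k (u v : 'cV[R]_k) :
  dotv ((1/2) *: u + (1/2) *: v) ((1/2) *: u + (1/2) *: v)
  = dotv u u / 2 + dotv v v / 2 - dotv (u - v) (u - v) / 4.
Proof.
rewrite !dotvDl !dotvDr !dotvZl !dotvZr !dotvNl !dotvNr (dotvC v u).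
set a := dotv u u; set b := dotv v v; set c := dotv u v. by field.
Qed.

Lemma nrm_cont k (a : 'cV[R]_k) : continuous (fun v : 'cV[R]_k => dotv (v - a) (v - a)).
Proof.
have -> : (fun v : 'cV[R]_k => dotv (v - a) (v - a)) =
   (fun v => \sum_(i <- index_enum 'I_k) ((v i ord0 - a i ord0) * (v i ord0 - a i ord0))).
  by apply: funext => v; rewrite dotvE; apply: eq_bigr => i _; rewrite !mxE.
apply: continuous_big => [|i _ v]; first exact: add_continuous.
have hc : {for v, continuous (fun x : 'cV[R]_k => x i ord0 - a i ord0)}.
  apply: (@continuousB _ _ _ (fun x : 'cV[R]_k => x i ord0) (fun=> a i ord0)).
    exact: coord_continuous.
  exact: cst_continuous.
exact: (continuousM hc hc).
Qed.

Lemma seq_cvg k (xs : nat -> 'cV[R]_k) :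
  (forall i j, dotv (xs i - xs j) (xs i - xs j) <= 4 * (i.+1%:R^-1 + j.+1%:R^-1)) ->
  cvg (xs @ \oo).
Proof.
move=> H.
suff : cauchy (xs @ \oo) by exact: cauchy_cvg.
suff : cauchy_ex (xs @ \oo) by exact: cauchy_exP.
move=> e e0; rewrite /fmapE -ball_normE /ball_.
set eps := e ^+ 2 / 8.
have eps0 : 0 < eps by rewrite divr_gt0 // exprn_gt0.
have [n n1e] : exists n, n.+1%:R^-1 < eps.
  exists (Num.truncn eps^-1).
  rewrite -[X in _ < X](invrK eps) ltf_pV2 ?posrE ?invr_gt0 //; exact: truncnS_gt.
exists (xs n), n => // m nm.
have h1 := norm_le (xs n - xs m).
have h2 := H n m.
have h3 : m.+1%:R^-1 <= n.+1%:R^-1 :> R by rewrite lef_pV2 ?posrE // ler_nat.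
have h4 : `|xs n - xs m| ^+ 2 < e ^+ 2.
  move: h1 h2 h3 n1e; rewrite /eps.
  set A := `|_| ^+ 2; set B := dotv _ _; set p := n.+1%:R^-1; set q := m.+1%:R^-1.
  set E := e ^+ 2 => h1 h2 h3 n1e; lra.
by rewrite /= -(ltr_pXn2r (_ : (0 < 2)%N)) // nnegrE ?normr_ge0 // ltW.
Qed.
End Prox2.

Section Prox3.
Variable R : realType.
Local Open Scope classical_set_scope.

Lemma fin_of_sum (e : \bar R) c r : (e + c%:E = r%:E)%E -> e = (r - c)%:E.
Proof. by case: e => // r' /= [<-]; rewrite addrK. Qed.

Lemma expand k (u v : 'cV[R]_k) t :
  dotv (u + t *: v) (u + t *: v) = dotv u u + 2 * t * dotv u v + t ^+ 2 * dotv v v.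
Proof.
rewrite !dotvDl !dotvDr !dotvZl !dotvZr (dotvC v u).
set a := dotv u u; set b := dotv v v; set c := dotv u v. ring.
Qed.

Lemma small_t (P Q : R) : 0 <= Q -> (forall t, 0 < t < 1 -> P <= t * Q) -> P <= 0.
Proof.
move=> Q0 H; rewrite leNgt; apply/negP => P0.
have t0 : 0 < P / (P + Q + 1) by rewrite divr_gt0 //; lra.
have t1 : P / (P + Q + 1) < 1 by rewrite ltr_pdivrMr; lra.
have := H _ (introT andP (conj t0 t1)).
have -> : P / (P + Q + 1) * Q = P - P * (P + 1) / (P + Q + 1).
  by field; lra.
have : 0 < P * (P + 1) / (P + Q + 1) by rewrite divr_gt0 ?mulr_gt0 //; lra.
lra.
Qed.

Lemma prox k (f : 'cV[R]_k -> \bar R) a :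
  proper_closed_convex f -> exists x, subdiff f x (a - x).
Proof.
move=> Hf; have [x0 [C HC]] := lower_bound Hf.
case: Hf => [[fnm [x1 fx1]] cl cv].
pose N (v : 'cV[R]_k) := dotv v v.
pose h x := (f x + (N (x - a) / 2)%:E)%E.
pose S := [set r : R | exists x, h x = r%:E].
set Lb := C - N (a - x0) / 2.
have hLb : forall x r, h x = r%:E -> Lb <= r.
  move=> x r hx.
  have : ((C - N (x - x0) / 4 + N (x - a) / 2)%:E <= h x)%E.
    by rewrite /h EFinD; apply: leeD2r; exact: HC.
  rewrite hx lee_fin.
  have := par (x - a) (a - x0); rewrite addrA subrK -/(N _) -/(N _) -/(N _).
  rewrite /Lb; lra.
have hasinf : has_inf S.
  split.
    exists (fine (h x1)), x1; rewrite fineK //.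
    by rewrite /h fin_numD fx1.
  by exists Lb => r [x hx]; exact: hLb hx.
set mu := inf S.
have muS : forall x r, h x = r%:E -> mu <= r.
  by move=> x r hx; apply: (ge_inf (proj2 hasinf)); exists x.
have : forall j : nat, exists x, exists r, h x = r%:E /\ r < mu + j.+1%:R^-1.
  move=> j; have jp : 0 < j.+1%:R^-1 :> R by rewrite invr_gt0.
  have [r [x hx] hr] := inf_adherent jp hasinf.
  by exists x, r.
move=> /choice [xs Hxs].
have fin_h : forall x r, h x = r%:E -> f x = (r - N (x - a) / 2)%:E.
  by move=> x r hx; exact: fin_of_sum hx.
have t12 : 0 < (1/2 : R) < 1 by apply/andP; split; lra.
have Hc : forall i j, N (xs i - xs j) <= 4 * (i.+1%:R^-1 + j.+1%:R^-1).
  move=> i j.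
  have [ri [hi ri_lt]] := Hxs i; have [rj [hj rj_lt]] := Hxs j.
  have fi := fin_h _ _ hi; have fj := fin_h _ _ hj.
  set m := (1/2) *: xs i + (1 - 1/2) *: xs j.
  have := cv (xs i) (xs j) (1/2) t12; rewrite fi fj -!EFinM -EFinD -/m.
  case Em: (f m) => [rm | | ] hm'; last by have := fnm m; rewrite Em.
    2: by move: hm'; rewrite leye_eq.
  rewrite lee_fin in hm'.
  have hmu : mu <= rm + N (m - a)/2 by apply: (muS m); rewrite /h Em -EFinD.
  have em : m - a = (1/2) *: (xs i - a) + (1/2) *: (xs j - a).
    by apply/matrixP=> p q; rewrite !mxE; field.
  have eij : xs i - xs j = (xs i - a) - (xs j - a) by rewrite opprB addrA subrK.
  have := mid_id (xs i - a) (xs j - a); rewrite -em -eij.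
  rewrite -/(N _) -/(N _) -/(N _) -/(N _).
  move: hm' hmu ri_lt rj_lt.
  set pi := i.+1%:R^-1; set pj := j.+1%:R^-1.
  set A1 := N (xs i - a); set A2 := N (xs j - a); set A3 := N (m - a); set A4 := N (xs i - xs j).
  move=> *; lra.
have cx := seq_cvg Hc.
set xstar := lim (xs @ \oo).
have qc : (fun n => N (xs n - a)) @ \oo --> N (xstar - a).
  have Hn : {for xstar, continuous (fun v : 'cV[R]_k => N (v - a))}.
    exact: nrm_cont.
  exact: (continuous_cvg _ Hn cx).
have Hfs : forall eps, 0 < eps -> (f xstar <= (mu - N (xstar - a) / 2 + eps)%:E)%E.
  move=> eps e0.
  set c := mu - N (xstar - a) / 2 + eps.
  have e2 : 0 < eps / 2 by rewrite divr_gt0.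
  have [N0 hN0] : exists N0 : nat, N0.+1%:R^-1 < eps / 2.
    exists (Num.truncn (eps / 2)^-1).
    rewrite -[X in _ < X](invrK (eps / 2)) ltf_pV2 ?posrE ?invr_gt0 //; exact: truncnS_gt.
  have E1 : \forall n \near \oo, `|N (xstar - a) - N (xs n - a)| < eps / 2.
    exact: (cvgr_dist_lt _ _ qc _ e2).
  have E2 : \forall n \near \oo, (N0 <= n)%N by exists N0.
  have Hev : \forall n \near \oo,
      [set q : 'cV[R]_k * R | (f q.1 <= q.2%:E)%E] (xs n, c).

    apply: (@filterS2 _ _ _ _ _ _ _ E1 E2) => n h1 h2 /=.
    have [rn [hn rn_lt]] := Hxs n.
    rewrite (fin_h _ _ hn) lee_fin.
    have h3 : n.+1%:R^-1 <= N0.+1%:R^-1 :> R by rewrite lef_pV2 ?posrE // ler_nat.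
    have h4 := ler_norm (N (xstar - a) - N (xs n - a)).
    move: h1 h3 h4 hN0 rn_lt; rewrite /c.
    set A1 := N (xstar - a); set A2 := N (xs n - a); set p1 := n.+1%:R^-1.
    set p2 := N0.+1%:R^-1; set B := `|_|.
    move=> *; lra.
  have Hcv : (xs n, c) @[n --> \oo] --> (xstar, c).
    exact: (cvg_pair cx (cvg_cst c)).
  exact: (closed_cvg _ cl Hev _ Hcv).
case Es: (f xstar) => [rs | | ]; last first.
- by have := fnm xstar; rewrite Es.
- by have := Hfs 1 ltr01; rewrite Es leye_eq.
have rs_le : rs + N (xstar - a) / 2 <= mu.
  have : rs <= mu - N (xstar - a) / 2.
    apply/ler_addgt0Pr => e e0; have := Hfs e e0; rewrite Es lee_fin; lra.
  lra.
have minp : forall y ry, f y = ry%:E -> rs + N (xstar - a) / 2 <= ry + N (y - a) / 2.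
  move=> y ry Ey; apply: le_trans rs_le _; apply: (muS y); by rewrite /h Ey -EFinD.
exists xstar; split; first by rewrite Es.
move=> z; rewrite Es.
case Ez: (f z) => [rz | | ]; last first.
- by have := fnm z; rewrite Ez.
- exact: leey.
rewrite -EFinD lee_fin.
have Q0 : 0 <= N (z - xstar) / 2 by rewrite divr_ge0 //; exact: dotv_ge0.
suff : rs + dotv (a - xstar) (z - xstar) - rz <= 0 by lra.
apply: (small_t Q0) => t t01.
set w := t *: z + (1 - t) *: xstar.
have := cv z xstar t t01; rewrite Ez Es -/w -!EFinM -EFinD.
case Ew: (f w) => [rw | | ] hw; last first.
- by have := fnm w; rewrite Ew.
- by move: hw; rewrite leye_eq.
rewrite lee_fin in hw.
have hm := minp w rw Ew.
have ew : w - a = (xstar - a) + t *: (z - xstar).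
  by apply/matrixP => p q; rewrite !mxE; ring.
have := expand (xstar - a) (z - xstar) t; rewrite -ew -/(N _) -/(N _) -/(N _) => ex.
have ed : dotv (a - xstar) (z - xstar) = - dotv (xstar - a) (z - xstar) by rewrite -opprB dotvNl.
rewrite ed.
have t0 : 0 < t by case/andP: t01.
move: hw hm ex; set D := dotv (xstar - a) (z - xstar).
set A1 := N (w - a); set A2 := N (xstar - a); set A3 := N (z - xstar) => hw hm ex.
have key : t * (rs - D - rz - t * (A3 / 2)) <= 0 by nra.
move: key; rewrite pmulr_rle0 // => key; lra.
Qed.
End Prox3.

Section Max.
Variable R : realType.



Lemma opT_max n p m (f : 'cV[R]_n -> \bar R) (g : 'cV[R]_p -> \bar R)
  (A : 'M[R]_(m, n)) (B : 'M[R]_(m, p)) (b : 'cV[R]_m) :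
  proper_closed_convex f -> proper_closed_convex g ->
  maximal_monotone_op (opT f g A B b).
Proof.
move=> Hf Hg; split; first exact: opT_mono.
move=> S Smono TS [[x y] c] [[w1 w2] w3] Szw.
have [a1 ea1] : exists a1, a1 = w1 + x + A^T *m c by eexists.
have [a2 ea2] : exists a2, a2 = w2 + y + B^T *m c by eexists.
have [c' ec'] : exists c', c' = c + w3 + b - A *m x - B *m y by eexists.
have [x' Hx'] := prox a1 Hf.
have [y' Hy'] := prox a2 Hg.
have Tz' : opT f g A B b (x', y', c')
   (a1 - x' - A^T *m c', a2 - y' - B^T *m c', A *m x' + B *m y' - b).
  by exists (a1 - x'), (a2 - y'); split.
have := Smono _ _ _ _ Szw (TS _ _ Tz').
rewrite /dot3 /sub3 /=.
have e1 : w1 - (a1 - x' - A^T *m c') = - (x - x') - A^T *m (c - c').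
  rewrite ea1 mulmxBr; move: (A^T *m c) (A^T *m c') => P Q.
  by apply/matrixP => i j; rewrite !mxE; ring.
have e2 : w2 - (a2 - y' - B^T *m c') = - (y - y') - B^T *m (c - c').
  rewrite ea2 mulmxBr; move: (B^T *m c) (B^T *m c') => P Q.
  by apply/matrixP => i j; rewrite !mxE; ring.
have e3 : w3 - (A *m x' + B *m y' - b) = - (c - c') + (A *m (x - x') + B *m (y - y')).
  rewrite ec' !mulmxBr; move: (A *m x) (A *m x') (B *m y) (B *m y') => P Q P' Q'.
  by apply/matrixP => i j; rewrite !mxE; ring.
rewrite e1 e2 e3 [dotv (c - c') _]dotvDr [dotv (c - c') (- _)]dotvNr => H0.
have := skew3 A B (x - x') (- (x - x')) (y - y') (- (y - y')) (c - c').
rewrite !dotvNr => H1.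
have hX := dotv_ge0 (x - x'); have hY := dotv_ge0 (y - y'); have hD := dotv_ge0 (c - c').
move: H0 H1 hX hY hD.
set X := dotv (x - x') (x - x'); set Y := dotv (y - y') (y - y'); set D := dotv (c - c') (c - c').
set T1 := dotv (x - x') _; set T2 := dotv (y - y') _; set T3 := dotv (c - c') _.
move=> H0 H1 hX hY hD.
have /dotv_eq0/eqP : X = 0 by lra.
have /dotv_eq0/eqP : Y = 0 by lra.
have /dotv_eq0/eqP : D = 0 by lra.
rewrite !subr_eq0 => /eqP ec /eqP ey /eqP ex.
exists (a1 - x'), (a2 - y'); split => /=.
- by rewrite ex.
- by rewrite ey.
- congr (_, _, _).
  + rewrite -ex ea1; move: (A^T *m c) => P.
    by apply/matrixP => i j; rewrite !mxE; ring.
  + rewrite -ey ea2; move: (B^T *m c) => P.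
    by apply/matrixP => i j; rewrite !mxE; ring.
  + move/eqP: ec; rewrite ec' eq_sym -subr_eq0.
    move: (A *m x) (B *m y) => P Q /eqP/matrixP e.
    apply/matrixP => i j; have := e i j; rewrite !mxE => e'.
    lra.
Qed.
End Max.

Unset Implicit Arguments.

Theorem proposition2p1 (R : realType) (n p m : nat)
  (f : 'cV[R]_n -> \bar R) (g : 'cV[R]_p -> \bar R)
  (A : 'M[R]_(m, n)) (B : 'M[R]_(m, p)) (b : 'cV[R]_m)
  (beta s tau theta : R) (G : 'M[R]_n) (H : 'M[R]_p) :
  proper_closed_convex f -> proper_closed_convex g ->
  0 < beta -> 0 <= s < 1 -> spd G -> spsd H -> region_R s tau theta ->
  maximal_monotone_op (opT f g A B b) /\ spsd (matM A B beta tau theta G H).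
Proof.
move=> hf hg hb hs hG hH hR; split.
  exact: opT_max.
exact: (matM_spsd A B hb hs hG hH hR).
Qed.
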